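(* Let $d \in \mathbb{N}$, $s \in \{1,\dots,d\}$, $M \geq 1$, $y \in [0,1]^d$, and $p \in (0,\infty]$. Then \[ \operatorname{supp} \vartheta_{M,y}^{(s)} \subset y + (M^{-1} [-1,1]^s \times \mathbb{R}^{d - s}) \] and \[ \frac12 \cdot (4s)^{-s/p}\cdot M^{-s/p}\le \| \vartheta_{M,y}^{(s)} \|_{L^p([0,1]^d)} \le 2^{s/p} \cdot M^{-s/p} . \]
   Context: Let $\varrho(x)=\max\{0,x\}$. For $M>0$, $\sigma\in\mathbb{R}$ define $\Lambda_{M,\sigma}:\mathbb{R}\to(-\infty,1]$ by $\Lambda_{M,\sigma}(t)=0$ if $t\le \sigma-\frac1M$ and $\Lambda_{M,\sigma}(t)=1-M|t-\sigma|$ if $t\ge\sigma-\frac1M$. For $s\in\{1,\dots,d\}$ and $y\in\mathbb{R}^d$ define $\Delta^{(s)}_{M,y}(x)=\big(\sum_{i=1}^s\Lambda_{M,y_i}(x_i)\big)-(s-1)$ and $\vartheta^{(s)}_{M,y}(x)=\varrho(\Delta^{(s)}_{M,y}(x))$ for $x\in\mathbb{R}^d$. For $p=\infty$, $s/p=0$. *)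

(* Defs.v *)
From HB Require Import structures.
From mathcomp Require Import all_boot all_order all_algebra.
From mathcomp Require Import all_classical all_reals all_analysis.
Set Implicit Arguments. Unset Strict Implicit. Unset Printing Implicit Defensive.
Import Order.TTheory GRing.Theory Num.Theory.
Import numFieldNormedType.Exports.
Local Open Scope ring_scope.
Local Open Scope classical_set_scope.

Section defs.
Variable R : realType.

Definition relu (x : R) : R := Num.max 0 x.

Definition Lambda (M sigma t : R) : R :=
  if t <= sigma - M^-1 then 0 else 1 - M * `|t - sigma|.

(* Delta^{(s)}_{M,y}(x) = sum_{i=1}^s Lambda_{M,y_i}(x_i) - (s-1); coordinates
   are indexed from 0, so i = 1..s becomes i = 0..s-1. *)
Definition Delta (d s : nat) (M : R) (y x : 'I_d -> R) : R :=
  (\sum_(i < d | (i < s)%N) Lambda M (y i) (x i)) - (s%:R - 1).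

Definition theta (d s : nat) (M : R) (y : 'I_d -> R) (x : 'I_d -> R) : R :=
  relu (Delta s M y x).

Definition supp_fun (d : nat) (f : ('I_d -> R) -> R) : set ('I_d -> R) :=
  closure ([set x | f x != 0] : set {ptws 'I_d -> R}).

(* Iterated Lebesgue integral over [0,1]^n (Tonelli: equals the integral
   against the d-dimensional Lebesgue measure for nonnegative measurable g). *)
Fixpoint iter_int (n : nat) (g : (nat -> R) -> \bar R) : \bar R :=
  match n with
  | 0 => g (fun _ => 0)
  | n'.+1 => (\int[@lebesgue_measure R]_(t in `[0%R, 1%R]%classic)
               iter_int n' (fun x => g (fun k => if k is k'.+1 then x k' else t)))%E
  end.

Definition cube_int (d : nat) (g : ('I_d -> R) -> \bar R) : \bar R :=
  iter_int d (fun x => g (fun i => x (nat_of_ord i))).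

(* L^p([0,1]^d) norm, p in (0, oo]; for p = oo the essential supremum
   w.r.t. Lebesgue measure on [0,1]^d (measure of A = cube integral of 1_A). *)
Definition LpNorm_cube (d : nat) (p : \bar R) (f : ('I_d -> R) -> R) : \bar R :=
  match p with
  | r%:E => ((cube_int (fun x => (`|f x|%:E `^ r)%E)) `^ r^-1)%E
  | +oo%E => ereal_inf [set c : \bar R |
               cube_int (fun x => if (c < `|f x|%:E)%E then 1%E else 0%E) = 0%E]
  | -oo%E => 0%E
  end.

(* s/p, with the convention s/p = 0 for p = oo *)
Definition s_over_p (s : nat) (p : \bar R) : R :=
  match p with
  | r%:E => s%:R / r
  | _ => 0
  end.

End defs.

(* Main.v *)
Require Import Defs.
From HB Require Import structures.
From mathcomp Require Import all_boot all_order all_algebra.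
From mathcomp Require Import all_classical all_reals all_analysis.
From mathcomp Require Import ring lra.
From mathcomp Require Import measurable_realfun.
Import Order.TTheory GRing.Theory Num.Theory.
Import numFieldNormedType.Exports.
Local Open Scope ring_scope.
Local Open Scope classical_set_scope.

Section S.
Variable R : realType.

Lemma Lambda_le1 (M sigma t : R) : 0 <= M -> Lambda M sigma t <= 1.
Proof.
move=> M0; rewrite /Lambda; case: ifP => _ //.
by rewrite lerBlDr lerDl mulr_ge0.
Qed.

Lemma Lambda_gt0 (M sigma t : R) : 0 < M -> 0 < Lambda M sigma t -> `|t - sigma| < M^-1.
Proof.
move=> M0; rewrite /Lambda; case: ifP; first by rewrite ltxx.
by rewrite subr_gt0 -ltr_pdivlMl // mulr1.
Qed.

Lemma sum_ones (d s : nat) : (s <= d)%N -> \sum_(i < d | (i < s)%N) (1:R) = s%:R.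
Proof.
move=> sd; rewrite -(big_mkord (fun i => (i < s)%N) (fun _ => 1)).
rewrite (_ : \sum_(0 <= i < d | (i < s)%N) (1:R) = \sum_(0 <= i < d | xpredT i && (i < s)%N) 1) //.
by rewrite -big_nat_widen // sumr_const_nat subn0.
Qed.


Lemma Delta_alt (d s : nat) (M : R) (y x : 'I_d -> R) : (s <= d)%N ->
  Delta s M y x = \sum_(i < d | (i < s)%N) (Lambda M (y i) (x i) - 1) + 1.
Proof.
move=> sd; rewrite /Delta sumrB sum_ones //; lra.
Qed.

Lemma theta_nz (d s : nat) (M : R) (y x : 'I_d -> R) : (s <= d)%N -> 0 < M ->
  theta s M y x != 0 -> forall i : 'I_d, (i < s)%N -> `|x i - y i| < M^-1.
Proof.
move=> sd M0 th j js; rewrite /theta /relu in th.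
have Dpos : 0 < Delta s M y x.
  move: th; case: (ltP 0 (Delta s M y x)) => // h. idtac.
  by rewrite eqxx.
apply: Lambda_gt0 => //; rewrite ltNge; apply/negP => Lj.
move: Dpos; rewrite Delta_alt // (bigD1 j) //= => Dpos.
have : \sum_(i < d | (i < s)%N && (i != j)) (Lambda M (y i) (x i) - 1) <= 0.
  by apply: sumr_le0 => i _; rewrite subr_le0 Lambda_le1 // ltW.
lra.
Qed.


Lemma supp_part (d s : nat) (M : R) (y : 'I_d -> R) : (s <= d)%N -> 0 < M ->
  supp_fun (theta s M y) `<=` [set x | forall i : 'I_d, (i < s)%N -> `|x i - y i| <= M^-1].
Proof.
move=> sd M0.
pose E : set {ptws 'I_d -> R} := \bigcap_(i in [set i : 'I_d | (i < s)%N])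
  (proj i @^-1` [set r : R | y i - M^-1 <= r] `&` proj i @^-1` [set r : R | r <= y i + M^-1]).
have cE : closed E.
  apply: closed_bigI => i _; apply: closedI; apply: preimage_closed => //;
  by move=> z _; exact: proj_continuous.
have AE : ([set x | theta s M y x != 0] : set {ptws 'I_d -> R}) `<=` E.
  move=> x /= /(@theta_nz d s M y x sd M0) h i /= /h /ltW; rewrite ler_distlC => /andP[h1 h2].
  rewrite /proj; split; lra.
move=> x /(closureS AE) /cE Ex i iS.
have [/= h1 h2] := Ex i iS.
rewrite /proj in h1 h2; rewrite ler_distlC; apply/andP; split; lra.
Qed.


Local Open Scope ereal_scope.

Lemma int_mono dd (T : measurableType dd) (mu : {measure set T -> \bar R}) (D : set T)
  (f1 f2 : T -> \bar R) : (forall x, D x -> 0 <= f1 x) -> (forall x, D x -> f1 x <= f2 x) ->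
  \int[mu]_(x in D) f1 x <= \int[mu]_(x in D) f2 x.
Proof.
move=> f10 f12.
have f20 : forall x, D x -> 0 <= f2 x by move=> x Dx; exact: le_trans (f10 x Dx) (f12 x Dx).
rewrite ge0_integralE // [X in _ <= X]ge0_integralE //.
apply: ge_ereal_sup => _ [h hf <-]; apply: ereal_sup_ubound; exists h => // x.
apply: le_trans (hf x) _; rewrite /patch; case: ifPn => [|_ //].
by rewrite inE => Dx; exact: f12.
Qed.

Definition incube (x : nat -> R) := forall k, (0 <= x k <= 1)%R.

Definition shift (t : R) (x : nat -> R) : nat -> R := fun k => if k is k'.+1 then x k' else t.

Lemma iter_ge0 n (g : (nat -> R) -> \bar R) : (forall x, incube x -> 0 <= g x) -> 0 <= iter_int n g.
Proof.
elim: n g => [|n IH] g g0 /=.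
  by apply: g0 => k; rewrite lexx ler01.
by apply: integral_ge0 => t /= Dt; apply: IH => x xc; apply: g0 => -[|k] //=.
Qed.

Lemma iter_mono n (g1 g2 : (nat -> R) -> \bar R) : (forall x, incube x -> 0 <= g1 x) ->
  (forall x, incube x -> g1 x <= g2 x) -> iter_int n g1 <= iter_int n g2.
Proof.
elim: n g1 g2 => [|n IH] g1 g2 g10 g12 /=.
  by apply: g12 => k; rewrite lexx ler01.
have sc : forall t x, `[0%R, 1%R] t -> incube x -> incube (shift t x).
  by move=> t x Dt xc [|k] //=; move: Dt; rewrite in_itv.
apply: int_mono => t Dt.
  by apply: iter_ge0 => x xc; apply: g10; exact: sc.
by apply: IH => x xc; [apply: g10|apply: g12]; exact: sc.
Qed.


Definition box_val n (a b : nat -> R) (x : nat -> R) : R :=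
  (\prod_(k < n) (if (a k <= x k <= b k)%R then 1 else 0))%R.

Lemma leb_meas (a b : R) : (Num.max a 0 <= Num.min b 1)%R ->
  lebesgue_measure (`[a, b] `&` `[0%R, 1%R]) = (Num.min b 1 - Num.max a 0)%:E.
Proof.
move=> ab.
have -> : `[a, b] `&` `[0%R, 1%R] = `[Num.max a 0%R, Num.min b 1%R]%classic.
  apply/seteqP; split => t /=; rewrite !in_itv /= ?ge_max ?le_min.
    by move=> [/andP[-> ->] /andP[-> ->]].
  by move=> /andP[/andP[-> ->] /andP[-> ->]].
rewrite lebesgue_measure_itv /=; case: ifPn => [_|]; first by rewrite EFinB.
rewrite lte_fin -leNgt => ba; have -> : Num.min b 1%R = Num.max a 0%R by apply/eqP; rewrite eq_le ab ba.
by rewrite subrr.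
Qed.

Lemma iter_box n (a b : nat -> R) (c : R) : (0 <= c)%R ->
  (forall k, Num.max (a k) 0 <= Num.min (b k) 1)%R ->
  iter_int n (fun x => (c * box_val n a b x)%:E) =
  (c * \prod_(k < n) (Num.min (b k) 1 - Num.max (a k) 0))%:E.
Proof.
elim: n a b c => [|n IH] a b c c0 ab /=.
  by rewrite /box_val !big_ord0.
pose ind t : R := (if (a 0 <= t <= b 0) then 1 else 0)%R.
have i0 t : (0 <= ind t)%R by rewrite /ind; case: ifP.
transitivity (\int[lebesgue_measure]_(t in `[0%R, 1%R])
   ((c * \prod_(k < n) (Num.min (b k.+1) 1 - Num.max (a k.+1) 0))%:E * (\1_(`[a 0, b 0]) t)%:E)).
  apply: eq_integral => t _.
  rewrite -EFinM (_ : (\1_(`[a 0, b 0]) t) = ind t)%R; last first.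
    rewrite indicE /ind; have [h|h] := boolP (t \in _).
      by move/set_mem: (h); rewrite /= in_itv /= => ->.
    case: ifP => // h'; exfalso; move/negP: h; apply; apply/mem_set.
    by rewrite /= in_itv /= h'.
  set P := (\prod_(k < n) _)%R.
  rewrite (_ : (c * P * ind t = c * ind t * P)%R); last by ring.
  rewrite /P -(IH (fun k => a k.+1) (fun k => b k.+1) (c * ind t)%R); last 2 first.
  - by rewrite mulr_ge0.
  - by move=> k; exact: ab.
  congr iter_int; apply: funext => x; congr EFin.
  by rewrite /box_val big_ord_recl /= mulrA.
rewrite ge0_integralZl_EFin //; last 2 first.
- by apply/measurable_EFinP; exact: measurable_indic.
- by rewrite mulr_ge0 // prodr_ge0 // => k _; rewrite subr_ge0 ab.
rewrite integral_indic //.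
have /= E := @leb_meas (a 0%N) (b 0%N) (ab 0%N). rewrite [X in _ * X = _]E -EFinM big_ord_recl /=.
by congr EFin; ring.
Qed.


Local Close Scope ereal_scope.

Lemma box01 n a b x : box_val n a b x = if [forall k : 'I_n, a k <= x k <= b k] then 1 else 0.
Proof.
rewrite /box_val; case: ifP => [/forallP h|/negbT].
  by rewrite big1 // => k _; rewrite h.
by rewrite negb_forall => /existsP [k hk]; rewrite (bigD1 k) //= (negbTE hk) mul0r.
Qed.

Lemma prod_if (n s : nat) (v : R) : (s <= n)%N ->
  \prod_(k < n) (if (k < s)%N then v else 1) = v ^+ s.
Proof.
move=> sn; rewrite -big_mkcond /=.
rewrite -(big_mkord (fun i => (i < s)%N) (fun _ => v)).
rewrite (_ : \prod_(0 <= i < n | (i < s)%N) v = \prod_(0 <= i < n | xpredT i && (i < s)%N) v) //.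
by rewrite -big_nat_widen // prodr_const_nat subn0.
Qed.

Lemma len_bounds (y e : R) : 0 <= y <= 1 -> 0 <= e ->
  [/\ Num.max (y - e) 0 <= Num.min (y + e) 1,
      Num.min (y + e) 1 - Num.max (y - e) 0 <= 2 * e &
      (e <= 1 -> e <= Num.min (y + e) 1 - Num.max (y - e) 0)].
Proof.
move=> /andP[y0 y1] e0.
case: (lerP (y + e) 1) => h; case: (lerP (y - e) 0) => h'; split => //; try lra.
Qed.

Lemma theta_ge0 (d s : nat) (M : R) (y x : 'I_d -> R) : 0 <= theta s M y x.
Proof. by rewrite /theta /relu le_max lexx. Qed.

Lemma theta_le1 (d s : nat) (M : R) (y x : 'I_d -> R) : (s <= d)%N -> 0 <= M ->
  theta s M y x <= 1.
Proof.
move=> sd M0; rewrite /theta /relu ge_max ler01 /= Delta_alt //.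
have : \sum_(i < d | (i < s)%N) (Lambda M (y i) (x i) - 1) <= 0.
  by apply: sumr_le0 => i _; rewrite subr_le0 Lambda_le1.
lra.
Qed.

Lemma theta_half (d s : nat) (M : R) (y x : 'I_d -> R) : (s <= d)%N -> (1 <= s)%N -> 1 <= M ->
  (forall i : 'I_d, (i < s)%N -> `|x i - y i| <= (4 * s%:R * M)^-1) ->
  2^-1 <= theta s M y x.
Proof.
move=> sd s1 M1 h; have M0 : 0 < M by lra.
have s0 : 1 <= s%:R :> R by rewrite ler1n.
set del := (4 * s%:R * M)^-1.
have Md : M * del = (4 * s%:R)^-1.
  by rewrite /del invfM mulrC -mulrA mulVf ?mulr1 // gt_eqF.
have Md0 : 0 <= M * del by rewrite Md invr_ge0; lra.
have Lb : forall i : 'I_d, (i < s)%N -> - (M * del) <= Lambda M (y i) (x i) - 1.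
  move=> i iS; have hi := h i iS; rewrite /Lambda; case: ifP => hh.
    exfalso; move: hi; rewrite -/del ler_distlC => /andP[_ h2].
    have : del < M^-1.
      rewrite /del ltf_pV2 ?posrE ?ltr_pMl //; try lra.
      by rewrite !mulr_gt0 //; lra.
    lra.
  have : M * `|x i - y i| <= M * del by rewrite ler_pM2l.
  lra.
rewrite /theta /relu le_max; apply/orP; right; rewrite Delta_alt //.
have : \sum_(i < d | (i < s)%N) (- (M * del)) <= \sum_(i < d | (i < s)%N) (Lambda M (y i) (x i) - 1).
  by apply: ler_sum => i iS; exact: Lb.
rewrite (eq_bigr (fun i => - (M * del) * 1)); last by move=> *; rewrite mulr1.
rewrite -mulr_sumr sum_ones // Md.
have : (4 * s%:R)^-1 * s%:R = 4^-1 :> R.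
  by rewrite invfM -mulrA mulVf ?mulr1 // gt_eqF //; lra.
lra.
Qed.


Lemma iter0 n : iter_int n (fun _ : nat -> R => 0%E) = 0%E.
Proof.
elim: n => [|n IH] //=.
by apply: integral0_eq => t _; rewrite IH.
Qed.

End S.
Arguments incube {R}.
Arguments box_val {R}.
Arguments iter_box {R}.
Arguments iter_mono {R}.
Arguments theta_half {R d s M y x}.
Arguments theta_le1 {R d s M y x}.
Arguments theta_ge0 {R d s M y x}.
Arguments box01 {R}.
Arguments iter0 {R}.

Theorem lemma2p3 (R : realType) (d s : nat) (M : R) (y : 'I_d -> R) (p : \bar R) :
  (1 <= s <= d)%N -> 1 <= M -> (forall i, 0 <= y i <= 1) -> (0 < p)%E ->
  supp_fun (theta s M y) `<=` [set x | forall i : 'I_d, (i < s)%N -> `|x i - y i| <= M^-1]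
  /\ ((2^-1 * (4 * s%:R) `^ (- s_over_p s p) * M `^ (- s_over_p s p))%:E
        <= LpNorm_cube p (theta s M y))%E
  /\ (LpNorm_cube p (theta s M y) <= (2 `^ (s_over_p s p) * M `^ (- s_over_p s p))%:E)%E.
Proof.
move=> /andP[s1 sd] M1 y01 p0.
have M0 : 0 < M by lra.
split; first exact: supp_part.
pose yn (k : nat) : R := if (insub k : option 'I_d) is Some i then y i else 0.
have ynv : forall i : 'I_d, yn i = y i by move=> i; rewrite /yn valK.
have yn01 : forall k, 0 <= yn k <= 1.
  by move=> k; rewrite /yn; case: insub => [i|] //=; rewrite lexx ler01.
have mm : Num.min (1:R) 1 - Num.max (0:R) 0 = 1.
  by case: (lerP (1:R) 1) => _; case: (lerP (0:R) 0) => _; lra.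
have sR : 1 <= s%:R :> R by rewrite ler1n.
pose aU k := if (k < s)%N then yn k - M^-1 else 0.
pose bU k := if (k < s)%N then yn k + M^-1 else 1.
pose del := (4 * s%:R * M)^-1.
have del0 : 0 < del by rewrite invr_gt0 !mulr_gt0 //; lra.
have del1 : del <= 1.
  rewrite /del invf_le1 ?mulr_gt0 //; try lra.
  by rewrite -[1]mulr1 ler_pM //; lra.
pose aL k := if (k < s)%N then yn k - del else 0.
pose bL k := if (k < s)%N then yn k + del else 1.
have Mi0 : 0 <= M^-1 by rewrite invr_ge0 ltW.
have abU : forall k, Num.max (aU k) 0 <= Num.min (bU k) 1.
  move=> k; rewrite /aU /bU; case: ifP => _.
    by case: (@len_bounds R (yn k) M^-1 (yn01 k) Mi0).
  by rewrite ge_max !le_min ler01 /=; lra.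
have abL : forall k, Num.max (aL k) 0 <= Num.min (bL k) 1.
  move=> k; rewrite /aL /bL; case: ifP => _.
    by case: (@len_bounds R (yn k) del (yn01 k) (ltW del0)).
  by rewrite ge_max !le_min ler01 /=; lra.
set PU := \prod_(k < d) (Num.min (bU k) 1 - Num.max (aU k) 0).
set PL := \prod_(k < d) (Num.min (bL k) 1 - Num.max (aL k) 0).
have PUb : PU <= (2 * M^-1) ^+ s.
  rewrite -(@prod_if R d s _ sd) /PU; apply: ler_prod => k _; rewrite subr_ge0 abU /=.
  rewrite /aU /bU; case: ifP => _; last by rewrite mm.
  by case: (@len_bounds R (yn k) M^-1 (yn01 k) Mi0).
have PLb : del ^+ s <= PL.
  rewrite -(@prod_if R d s _ sd) /PL; apply: ler_prod => k _; rewrite /aL /bL; case: ifP => _.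
    by rewrite ltW //=; case: (@len_bounds R (yn k) del (yn01 k) (ltW del0)) => _ _; apply.
  by rewrite mm; apply/andP; split; lra.
have thU : forall x : nat -> R, incube x -> theta s M y (fun i => x i) != 0 ->
    [forall k : 'I_d, aU k <= x k <= bU k].
  move=> x xc th; apply/forallP => k; rewrite /aU /bU; case: ifP => ks; last exact: xc.
  have := @theta_nz R d s M y _ sd M0 th k ks; rewrite ynv => /ltW; rewrite ler_distlC => /andP[h1 h2].
  apply/andP; split; lra.
have thL : forall x : nat -> R, [forall k : 'I_d, aL k <= x k <= bL k] ->
    2^-1 <= theta s M y (fun i => x i).
  move=> x /forallP h; apply: theta_half => // i iS.
  move: (h i); rewrite /aL /bL iS ynv ler_distlC => /andP[h1 h2].
  apply/andP; split; rewrite -/del; lra.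
have PL0 : 0 <= PL by exact: le_trans (exprn_ge0 _ (ltW del0)) PLb.
case: p p0 => [r||//] p0.
  rewrite lte_fin in p0.
  rewrite /LpNorm_cube /s_over_p.
  set I := cube_int _.
  have Iup : (I <= (1 * PU)%:E)%E.
    rewrite /I /cube_int /PU -(iter_box d aU bU 1) //.
    apply: iter_mono => x xc; first exact: poweR_ge0.
    rewrite poweR_EFin lee_fin mul1r ger0_norm ?theta_ge0 // box01.
    case: ifPn => hb.
      rewrite (_ : 1 = powR 1 r); last by rewrite powR1.
      apply: ge0_ler_powR; rewrite ?nnegrE ?ler01 ?theta_ge0 ?(ltW p0) //.
      by apply: theta_le1 => //; exact: ltW.
    have -> : theta s M y (fun i => x i) = 0.
      by apply/eqP; apply: contraNT hb => hn; exact: thU.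
    by rewrite powR0 // gt_eqF.
  have Ilo : (((2^-1 `^ r) * PL)%:E <= I)%E.
    rewrite /I /cube_int /PL -(iter_box d aL bL (2^-1 `^ r)) ?powR_ge0 //.
    apply: iter_mono => x xc.
      by rewrite lee_fin mulr_ge0 ?powR_ge0 // box01; case: ifP.
    rewrite poweR_EFin lee_fin ger0_norm ?theta_ge0 // box01; case: ifPn => hb.
      rewrite mulr1; apply: ge0_ler_powR; rewrite ?nnegrE ?theta_ge0 ?(ltW p0) //.
      exact: thL.
    by rewrite mulr0 powR_ge0.
  have lo0 : 0 <= 2^-1 `^ r * PL by rewrite mulr_ge0 ?powR_ge0.
  have Ifin : I \is a fin_num.
    rewrite ge0_fin_numE; first exact: le_lt_trans Iup (ltry _).
    by apply: le_trans Ilo; rewrite lee_fin.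
  rewrite -(fineK Ifin) in Iup Ilo *; rewrite poweR_EFin !lee_fin.
  set i := fine I; rewrite lee_fin in Iup Ilo.
  have i0 : 0 <= i by exact: le_trans lo0 Ilo.
  have ri0 : 0 <= r^-1 by rewrite invr_ge0 ltW.
  have M'0 : 0 <= 4 * s%:R * M by rewrite !mulr_ge0 //; lra.
  split.
    have E1 : (2^-1 `^ r * del ^+ s) `^ r^-1 = 2^-1 * (4 * s%:R) `^ (- (s%:R / r)) * M `^ (- (s%:R / r)).
      rewrite powRM ?powR_ge0 ?exprn_ge0 ?ltW // -powRrM mulfV ?gt_eqF // powRr1 ?invr_ge0 ?ler0n //.
      rewrite -(@powR_mulrn R del s (ltW del0)) -powRrM /del -(@powR_inv1 R _ M'0) -powRrM mulN1r.
      by rewrite powRM ?mulr_ge0 ?ler0n ?ltW // mulrA.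
    rewrite -E1; apply: ge0_ler_powR => //; rewrite ?nnegrE //.
      by rewrite mulr_ge0 ?powR_ge0 // exprn_ge0 // ltW.
    move: Ilo; rewrite lee_fin => Ilo.
    apply: (le_trans _ Ilo); apply: ler_wpM2l => //; exact: powR_ge0.
  have E2 : ((2 / M) ^+ s) `^ r^-1 = 2 `^ (s%:R / r) * M `^ (- (s%:R / r)).
    have h2M : 0 <= 2 / M :> R by rewrite divr_ge0 // ltW.
    rewrite -(@powR_mulrn R (2 / M) s h2M) -powRrM powRM ?ler0n //.
    by rewrite -(@powR_inv1 R M (ltW M0)) -powRrM mulN1r.
  rewrite -E2; apply: ge0_ler_powR => //; rewrite ?nnegrE //.
    by rewrite exprn_ge0 // divr_ge0 // ltW.
  by apply: (le_trans Iup); rewrite mul1r.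
rewrite /s_over_p /LpNorm_cube oppr0 !powRr0 !mulr1; split.
  apply: le_ereal_inf_tmp => c /=; set J := cube_int _ => JE.
  rewrite leNgt; apply/negP => cl.
  have : ((1 * PL)%:E <= J)%E.
    rewrite /J /cube_int /PL -(iter_box d aL bL 1) //.
    apply: iter_mono => x xc.
      by rewrite lee_fin mulr_ge0 // box01; case: ifP.
    rewrite box01 mul1r; case: ifPn => hb; last by case: ifP.
    rewrite ifT //; apply: (lt_le_trans cl); rewrite lee_fin ger0_norm ?theta_ge0 //.
    exact: thL.
  rewrite JE lee_fin mul1r => PLle0.
  have := lt_le_trans (exprn_gt0 s del0) PLb; lra.
apply: ereal_inf_lbound => /=.
rewrite (_ : (fun x => _) = fun _ => 0%E); first exact: iter0.
apply/funext => X; rewrite lte_fin ger0_norm ?theta_ge0 // ltNge theta_le1 //.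
exact: ltW.
Qed.
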